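(* Let $\mathcal{A}$ be a unital algebra over a field $F$ with $\operatorname{char}(F)\neq 2$, let $f:\mathcal{A}\to\mathcal{A}$ be linear and let $\alpha=\tfrac12 f(1)$. Then (a) $f\in\operatorname{QJCent}(\mathcal{A})$ if and only if $f(x)=\alpha\circ x$ for all $x\in\mathcal{A}$ and $\alpha\in Z_Q(\mathcal{A})$; (b) $f\in\operatorname{JCent}(\mathcal{A})$ if and only if $f(x)=\alpha\circ x$ for all $x\in\mathcal{A}$ and $\alpha\in Z_J(\mathcal{A})$.
   Context: $x\circ y=xy+yx$, $[x,y]=xy-yx$. $\operatorname{QJCent}(\mathcal{A})$ is the set of linear $f:\mathcal{A}\to\mathcal{A}$ with $f(x)\circ y=x\circ f(y)$ for all $x,y$; $\operatorname{JCent}(\mathcal{A})$ is the set of linear $f$ with $f(x\circ y)=f(x)\circ y$ for all $x,y$. $Z_J(\mathcal{A})=\{a\in\mathcal{A}: [[a,x],y]=0\ \forall x,y\in\mathcal{A}\}$ and $Z_Q(\mathcal{A})=\{a\in\mathcal{A}: [a,[x,y]]=0\ \forall x,y\in\mathcal{A}\}$. *)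

(* Defs.v *)
From HB Require Import structures.
From mathcomp Require Import all_boot all_order all_algebra.
Set Implicit Arguments. Unset Strict Implicit. Unset Printing Implicit Defensive.
Import GRing.Theory.
Local Open Scope ring_scope.

Definition jprod (R : nzRingType) (x y : R) : R := x * y + y * x.
Definition lbr (R : nzRingType) (x y : R) : R := x * y - y * x.

Definition QJCent (F : fieldType) (A : algType F) (f : {linear A -> A}) : Prop :=
  forall x y : A, jprod (f x) y = jprod x (f y).

Definition JCent (F : fieldType) (A : algType F) (f : {linear A -> A}) : Prop :=
  forall x y : A, f (jprod x y) = jprod (f x) y.

Definition Z_J (R : nzRingType) (a : R) : Prop :=
  forall x y : R, lbr (lbr a x) y = 0.

Definition Z_Q (R : nzRingType) (a : R) : Prop :=
  forall x y : R, lbr a (lbr x y) = 0.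

(* Main.v *)
Require Import Defs.
From HB Require Import structures.
From mathcomp Require Import all_boot all_order all_algebra.
Import GRing.Theory.
Local Open Scope ring_scope.

Lemma z1 (V : zmodType) (A B C D E G : V) : A + B + (C + D) - (B + E + (G + C)) = A - G - (E - D).
Proof.
rewrite (addrC C D) addrACA (addrC G C) (addrACA B E) addrKA opprB opprD.
rewrite (addrACA A (-G)) addrC; congr (_ + _); apply: addrC.
Qed.

Lemma z2 (V : zmodType) (A B C D E G : V) : A+G+(E+D) - (A+B+(C+D)) = G - C - (B - E).
Proof.
rewrite (addrC E D) (addrC C D) (addrACA A G) (addrACA A B) (addrC (A + D)) addrKA.
rewrite opprB opprD (addrACA G (-C)); congr (_ + _); apply: addrC.
Qed.

Lemma Qid (R : nzRingType) (a x y : R) :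
  jprod (jprod a x) y - jprod x (jprod a y) = lbr a (lbr x y).
Proof.
rewrite /jprod /lbr ?mulrDl ?mulrDr ?mulrBl ?mulrBr ?mulrN ?mulNr ?mulrA; exact: z1.
Qed.

Lemma Jid (R : nzRingType) (a x y : R) :
  jprod a (jprod x y) - jprod (jprod a x) y = lbr (lbr a y) x.
Proof.
rewrite /jprod /lbr ?mulrDl ?mulrDr ?mulrBl ?mulrBr ?mulrN ?mulNr ?mulrA; exact: z2.
Qed.

Lemma jprodC (R : nzRingType) (a x : R) : jprod a x = jprod x a.
Proof. by rewrite /jprod addrC. Qed.

Lemma jprodZl (F : fieldType) (A : algType F) (k : F) (a x : A) :
  jprod (k *: a) x = k *: jprod a x.
Proof. by rewrite /jprod scalerDr scalerAl scalerAr. Qed.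

Lemma jprod1l (R : nzRingType) (x : R) : jprod 1 x = x *+ 2.
Proof. by rewrite /jprod mul1r mulr1 mulr2n. Qed.

Lemma jprod1r (R : nzRingType) (x : R) : jprod x 1 = x *+ 2.
Proof. by rewrite /jprod mul1r mulr1 mulr2n. Qed.

Lemma half (F : fieldType) (A : algType F) (hchar : (2%:R : F) != 0) (v w : A) :
  v *+ 2 = (2%:R : F) *: w -> v = w.
Proof.
rewrite -scaler_nat => /(congr1 (fun u => (2%:R : F)^-1 *: u)).
by rewrite !scalerA mulVf // !scale1r.
Qed.

Theorem theorem3p1 (F : fieldType) (A : algType F) (f : {linear A -> A})
  (hchar : (2%:R : F) != 0) :
  let alpha := (2%:R : F)^-1 *: f 1 in
  (QJCent f <-> ((forall x : A, f x = jprod alpha x) /\ Z_Q alpha)) /\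
  (JCent f <-> ((forall x : A, f x = jprod alpha x) /\ Z_J alpha)).
Proof.
move=> alpha.
have f1 : f 1 = (2%:R : F) *: alpha by rewrite /alpha scalerA mulfV // scale1r.
split; split.
- move=> H.
  have hf : forall x, f x = jprod alpha x.
    move=> x; apply: (@half F A hchar (f x) (jprod alpha x)).
    by rewrite -(@jprod1r A (f x)) H f1 jprodC jprodZl.
  split=> // x y; rewrite -Qid -!hf H; exact: subrr.
- case=> hf hZ x y; apply/eqP; rewrite -subr_eq0 !hf Qid; exact/eqP.
- move=> H.
  have hf : forall x, f x = jprod alpha x.
    move=> x; apply: (@half F A hchar (f x) (jprod alpha x)).
    have := H 1 x; rewrite f1 jprodZl => <-; by rewrite jprod1l raddfMn.
  split=> // x y; rewrite -Jid -!hf H; exact: subrr.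
- case=> hf hZ x y; apply/eqP; rewrite -subr_eq0 !hf Jid; exact/eqP.
Qed.
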